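(* Let $\kappa$ be an infinite cardinal. There exist a non-abelian group $G$ with $|G|=2^\kappa$ and a colouring $c:G\to\kappa$ such that for all non-identity elements $x,y\in G$, if $c(x)=c(y)$ then $c(x)\neq c(xy)$. *)

(* Defs.v *)
From Stdlib Require Import List.
From mathcomp Require Import ssreflect ssrfun ssrbool.

Definition is_group (G : Type) (mul : G -> G -> G) (e : G) (inv : G -> G) : Prop :=
  (forall x y z, mul x (mul y z) = mul (mul x y) z) /\
  (forall x, mul e x = x /\ mul x e = x) /\
  (forall x, mul (inv x) x = e /\ mul x (inv x) = e).

Definition non_abelian (G : Type) (mul : G -> G -> G) : Prop :=
  exists x y, mul x y <> mul y x.

Definition infinite_type (K : Type) : Prop :=
  ~ exists s : list K, forall x : K, In x s.

Definition card_eq_pow2 (A K : Type) : Prop :=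
  exists f : A -> (K -> bool), bijective f.

(* Main.v *)
Require Import Defs.
From Stdlib Require Import List.
From mathcomp Require Import ssreflect ssrfun ssrbool.
From Stdlib Require Import Classical ClassicalEpsilon FunctionalExtensionality Arith Lia.

Definition deq {K : Type} (a b : K) : {a = b} + {a <> b} :=
  excluded_middle_informative (a = b).

Lemma fresh_ex (K : Type) (hK : infinite_type K) (l : list K) : exists x, ~ In x l.
Proof. apply: not_all_ex_not => H; apply: hK; by exists l. Qed.

Definition fresh (K : Type) (hK : infinite_type K) (l : list K) : K :=
  proj1_sig (constructive_indefinite_description _ (fresh_ex K hK l)).

Lemma fresh_spec K hK l : ~ In (fresh K hK l) l.
Proof. exact: (proj2_sig (constructive_indefinite_description _ (fresh_ex K hK l))). Qed.

Fixpoint LL (K : Type) (hK : infinite_type K) (n : nat) : list K :=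
  match n with 0 => nil | S n => fresh K hK (LL K hK n) :: LL K hK n end.

Definition jj K hK n := fresh K hK (LL K hK n).

Lemma LL_mono K hK m n : m < n -> In (jj K hK m) (LL K hK n).
Proof.
elim: n => [|n IH] H; first lia.
simpl. have [->|Hm] : m = n \/ m < n by lia.
- by left.
- right; exact: IH.
Qed.

Lemma jj_inj K hK m n : jj K hK m = jj K hK n -> m = n.
Proof.
move=> E.
have [H|[H|H]] : m < n \/ m = n \/ n < m by lia.
- exfalso; have := LL_mono K hK m n H; rewrite E; apply: fresh_spec.
- by [].
- exfalso; have := LL_mono K hK n m H; rewrite -E; apply: fresh_spec.
Qed.

Definition sh K hK (k : K) : K :=
  match excluded_middle_informative (exists n, k = jj K hK n) with
  | left H => jj K hK (proj1_sig (constructive_indefinite_description _ H) + 8)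
  | right _ => k
  end.

Lemma sh_spec K hK k :
  (exists n, k = jj K hK n /\ sh K hK k = jj K hK (n + 8)) \/
  ((~ exists n, k = jj K hK n) /\ sh K hK k = k).
Proof.
rewrite /sh; case: excluded_middle_informative => H.
- left; case: (constructive_indefinite_description _ H) => n Hn /=; by exists n.
- by right.
Qed.

Lemma sh_inj K hK k k' : sh K hK k = sh K hK k' -> k = k'.
Proof.
case: (sh_spec K hK k) => [[n [-> ->]]|[Hn ->]];
case: (sh_spec K hK k') => [[n' [-> ->]]|[Hn' ->]] //.
- by move=> /jj_inj E; have -> : n = n' by lia.
- move=> E; exfalso; apply: Hn'; by exists (n + 8).
- move=> E; exfalso; apply: Hn; by exists (n' + 8).
Qed.

Lemma sh_small K hK k m : m < 8 -> sh K hK k <> jj K hK m.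
Proof.
move=> Hm.
case: (sh_spec K hK k) => [[n [_ ->]]|[Hn ->]].
- move=> /jj_inj; lia.
- move=> E; apply: Hn; by exists m.
Qed.

Definition gmul {K : Type} (a b c : K) (f g : K -> bool) : K -> bool :=
  fun k => xorb (xorb (f k) (g k)) (if deq k c then f a && g b else false).

Definition ginv {K : Type} (a b c : K) (f : K -> bool) : K -> bool :=
  fun k => xorb (f k) (if deq k c then f a && f b else false).

Lemma gmul_ne {K : Type} (a b c : K) f g k : k <> c -> gmul a b c f g k = xorb (f k) (g k).
Proof. move=> H; rewrite /gmul; case: deq => //= ?; by case: (f k); case: (g k). Qed.

Lemma ginv_ne {K : Type} (a b c : K) f k : k <> c -> ginv a b c f k = f k.
Proof. move=> H; rewrite /ginv; case: deq => //= ?; by case: (f k). Qed.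

Definition code (x y z : bool) : nat := Nat.b2n x + 2 * Nat.b2n y + 4 * Nat.b2n z.

Lemma code_lt x y z : code x y z < 8.
Proof. case: x; case: y; case: z; rewrite /code /=; lia. Qed.

Lemma code_inj x y z x' y' z' : code x y z = code x' y' z' -> x = x' /\ y = y' /\ z = z'.
Proof. case: x; case: y; case: z; case: x'; case: y'; case: z'; rewrite /code /=; (lia || auto). Qed.

Definition bsupp {K : Type} (a b c : K) (f : K -> bool) : Prop :=
  exists k, k <> a /\ k <> b /\ k <> c /\ f k = true.

Definition col K hK (f : K -> bool) : K :=
  let a := jj K hK 0 in let b := jj K hK 1 in let c := jj K hK 2 in
  match excluded_middle_informative (bsupp a b c f) with
  | left H => sh K hK (proj1_sig (constructive_indefinite_description _ H))
  | right _ => jj K hK (code (f a) (f b) (f c))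
  end.

Lemma col_spec K hK f :
  let a := jj K hK 0 in let b := jj K hK 1 in let c := jj K hK 2 in
  (exists k, k <> a /\ k <> b /\ k <> c /\ f k = true /\ col K hK f = sh K hK k) \/
  (~ bsupp a b c f /\ col K hK f = jj K hK (code (f a) (f b) (f c))).
Proof.
rewrite /col /=; case: excluded_middle_informative => H.
- left; case: (constructive_indefinite_description _ H) => k [H1 [H2 [H3 H4]]] /=.
  by exists k.
- by right.
Qed.

Theorem mainTheorem4 (K : Type) (hK : infinite_type K) :
  exists (G : Type) (mul : G -> G -> G) (e : G) (inv : G -> G),
    is_group G mul e inv /\ non_abelian G mul /\ card_eq_pow2 G K /\
    exists c : G -> K,
      forall x y : G, x <> e -> y <> e -> c x = c y -> c x <> c (mul x y).
Proof.
pose a := jj K hK 0; pose b := jj K hK 1; pose c := jj K hK 2.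
have ab : a <> b by move=> /jj_inj.
have ac : a <> c by move=> /jj_inj.
have bc : b <> c by move=> /jj_inj.
exists (K -> bool), (gmul a b c), (fun _ => false), (ginv a b c).
split; [|split; [|split]].
- split; [|split].
  + move=> f g h; apply: functional_extensionality => k.
    rewrite /gmul.
    case: (deq b c) => // ?; case: (deq a c) => // ?.
    case: deq => ?; last by case: (f k); case: (g k); case: (h k).
    by case: (f k); case: (g k); case: (h k); case: (f a); case: (g a); case: (g b); case: (h b).
  + move=> f; split; apply: functional_extensionality => k; rewrite /gmul /=;
      case: deq => ?; by case: (f k); case: (f a); case: (f b).
  + move=> f; split; apply: functional_extensionality => k; rewrite /gmul.
    * rewrite /ginv; case: (deq a c) => // ?.
      case: deq => ?; by case: (f k); case: (f a); case: (f b).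
    * rewrite /ginv; case: (deq b c) => // ?.
      case: deq => ?; by case: (f k); case: (f a); case: (f b).
- exists (fun k => if deq k a then true else false), (fun k => if deq k b then true else false).
  move=> /(f_equal (fun h => h c)); rewrite /gmul.
  case: (deq c c) => // ?.
  case: (deq a a) => // ?; case: (deq b b) => // ?.
  case: (deq b a) => [E|?]; first by case: ab.
  case: (deq a b) => [E|?] //.
  by case: (deq c a); case: (deq c b).
- exists id; by exists id.
- exists (col K hK) => x y Hx Hy.
  case: (col_spec K hK x) => [[kx [x1 [x2 [x3 [x4 ->]]]]]|[nx ->]];
  case: (col_spec K hK y) => [[ky [y1 [y2 [y3 [y4 ->]]]]]|[ny ->]].
  + move=> E0; move: (sh_inj K hK _ _ E0) => E; subst ky.
    have Hk : gmul a b c x y kx = false by rewrite gmul_ne // x4 y4.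
    case: (col_spec K hK (gmul a b c x y)) => [[k [_ [_ [_ [k4 ->]]]]]|[_ ->]].
    * move=> E1; move: (sh_inj K hK _ _ E1) => E2; subst k; by rewrite Hk in k4.
    * apply: sh_small; exact: code_lt.
  + move=> E; exfalso; exact: (sh_small K hK kx _ (code_lt _ _ _) E).
  + move=> E; exfalso; exact: (sh_small K hK ky _ (code_lt _ _ _) (esym E)).
  + move=> /jj_inj /code_inj [E1 [E2 E3]].
    have Exy : x = y.
      apply: functional_extensionality => k.
      case: (deq k a) => [->|ka] //; case: (deq k b) => [->|kb] //;
      case: (deq k c) => [->|kc] //.
      case Hxk: (x k); first by exfalso; apply: nx; exists k.
      case Hyk: (y k) => //; by exfalso; apply: ny; exists k.
    subst y.
    have nxx : ~ bsupp a b c (gmul a b c x x).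
      move=> [k [k1 [k2 [k3]]]]; rewrite gmul_ne //; by case: (x k).
    case: (col_spec K hK (gmul a b c x x)) => [[k [k1 [k2 [k3 [k4 _]]]]]|[_ ->]].
      by exfalso; apply: nxx; exists k.
    move=> /jj_inj /code_inj.
    rewrite (gmul_ne a b c x x a ac) (gmul_ne a b c x x b bc) /gmul.
    case: (deq c c) => // ?.
    move=> [E4 [E5 E6]]; apply: Hx; apply: functional_extensionality => k.
    have xa : x a = false by move: E4; case: (x a).
    have xb : x b = false by move: E5; case: (x b).
    have xc : x c = false by move: E6; rewrite xa xb; case: (x c).
    case: (deq k a) => [->|ka] //; case: (deq k b) => [->|kb] //;
    case: (deq k c) => [->|kc] //.
    case Hxk: (x k) => //; by exfalso; apply: nx; exists k.
Qed.
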